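(* Let $\mathbb F$ be algebraically closed with $\operatorname{char}\mathbb F\neq 2$. For any $a,b,c\in\mathbb F$ and $d\in\mathbb N$ there exists a $(d+1)$-dimensional $\Re$-module with an $\mathbb F$-basis $v_0,\dots,v_d$ such that $Av_i=\theta_iv_i+v_{i+1}$ (with $v_{d+1}=0$) and $Bv_i=\theta_i^*v_i+\varphi_iv_{i-1}$ (with $v_{-1}=0$) for $0\le i\le d$, and on which $\alpha,\beta,\delta$ act as scalar multiplication by $(c-b)(c+b+1)(a-\tfrac d2)(a+\tfrac d2+1)$, $(a-c)(a+c+1)(b-\tfrac d2)(b+\tfrac d2+1)$, and $\tfrac d2(\tfrac d2+1)+a(a+1)+b(b+1)+c(c+1)$, respectively.
   Context: The Racah algebra $\Re$ is the unital associative $\mathbb F$-algebra with generators $A,B,C,D$ and relations $[A,B]=[B,C]=[C,A]=2D$ together with the requirement that each of $\alpha:=[A,D]+AC-BA$, $\beta:=[B,D]+BA-CB$, $\gamma:=[C,D]+CB-AC$ is central in $\Re$; $\delta:=A+B+C$. Here $\theta_i=(a+\tfrac d2-i)(a+\tfrac d2-i+1)$, $\theta_i^*=(b+\tfrac d2-i)(b+\tfrac d2-i+1)$, $\varphi_i=i(i-d-1)(a+b+c+\tfrac d2-i+2)(a+b-c+\tfrac d2-i+1)$. *)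

(* Defs.v *)
From HB Require Import structures.
From mathcomp Require Import all_boot all_order all_algebra.
Set Implicit Arguments. Unset Strict Implicit. Unset Printing Implicit Defensive.
Import GRing.Theory.
Local Open Scope ring_scope.

Definition comm_mx_op {F : fieldType} {n : nat} (X Y : 'M[F]_n) : 'M[F]_n :=
  X *m Y - Y *m X.

(* An R-module structure on F^n (column vectors) is given by the images
   A, B, C, D of the generators, satisfying the defining relations of the
   Racah algebra: [A,B]=[B,C]=[C,A]=2D and alpha, beta, gamma commute with
   all generators (hence with the whole image of the algebra). *)
Definition racah_alpha {F : fieldType} {n : nat} (A B C D : 'M[F]_n) :=
  comm_mx_op A D + A *m C - B *m A.
Definition racah_beta {F : fieldType} {n : nat} (A B C D : 'M[F]_n) :=
  comm_mx_op B D + B *m A - C *m B.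
Definition racah_gamma {F : fieldType} {n : nat} (A B C D : 'M[F]_n) :=
  comm_mx_op C D + C *m B - A *m C.
Definition racah_delta {F : fieldType} {n : nat} (A B C D : 'M[F]_n) :=
  A + B + C.

Definition commutes_with_gens {F : fieldType} {n : nat} (X A B C D : 'M[F]_n) :=
  [/\ comm_mx_op X A = 0, comm_mx_op X B = 0, comm_mx_op X C = 0
    & comm_mx_op X D = 0].

Definition is_racah_module {F : fieldType} {n : nat} (A B C D : 'M[F]_n) : Prop :=
  [/\ comm_mx_op A B = 2%:R *: D, comm_mx_op B C = 2%:R *: D
    & comm_mx_op C A = 2%:R *: D]
  /\ [/\ commutes_with_gens (racah_alpha A B C D) A B C D,
      commutes_with_gens (racah_beta A B C D) A B C D
    & commutes_with_gens (racah_gamma A B C D) A B C D].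

(* Basis vector v_i of F^(d+1) (standard basis), with v_i = 0 for i > d. *)
Definition bvec {F : fieldType} (n i : nat) : 'cV[F]_n :=
  \col_(j < n) (if (j : nat) == i then 1 else 0).

Definition bvec_pred {F : fieldType} (n i : nat) : 'cV[F]_n :=
  if i is k.+1 then bvec n k else 0.

Definition half_d {F : fieldType} (d : nat) : F := d%:R / 2%:R.

Definition theta {F : fieldType} (a : F) (d i : nat) : F :=
  (a + half_d d - i%:R) * (a + half_d d - i%:R + 1).
Definition theta_s {F : fieldType} (b : F) (d i : nat) : F :=
  (b + half_d d - i%:R) * (b + half_d d - i%:R + 1).
Definition phi {F : fieldType} (a b c : F) (d i : nat) : F :=
  i%:R * (i%:R - d%:R - 1) * (a + b + c + half_d d - i%:R + 2%:R)
    * (a + b - c + half_d d - i%:R + 1).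

(* Main.v *)
Require Import Defs.
From HB Require Import structures.
From mathcomp Require Import all_boot all_order all_algebra.
From mathcomp Require Import zify ring.
Import GRing.Theory.
Local Open Scope ring_scope.

Definition Amx {F : fieldType} (a : F) (d : nat) : 'M[F]_d.+1 :=
  \matrix_(r < d.+1, s < d.+1)
  (if (r:nat) == s then theta a d s else if (r:nat) == s.+1 then 1 else 0).
Definition Bmx {F : fieldType} (a b c : F) (d : nat) : 'M[F]_d.+1 :=
  \matrix_(r < d.+1, s < d.+1)
  (if (r:nat) == s then theta_s b d s else if (r:nat).+1 == s then phi a b c d s else 0).

Lemma mulbvec (F : fieldType) d (M : 'M[F]_d.+1) i r :
  (M *m bvec d.+1 i) r 0 = if (i <= d)%N then M r (inord i) else 0.
Proof.
rewrite mxE; case: leqP => h.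
  rewrite (bigD1 (inord i)) //= big1 ?addr0.
    by rewrite mxE inordK // eqxx mulr1.
  move=> j hj; rewrite mxE.
  have -> : ((j : nat) == i) = false.
    apply/negbTE; apply: contra hj => /eqP <-; by rewrite inord_val.
  by rewrite mulr0.
apply: big1 => j _; rewrite mxE.
have -> : ((j : nat) == i) = false.
  have := ltn_ord j; move=> hj; apply/negbTE/eqP; lia.
by rewrite mulr0.
Qed.

Lemma mx_ext (F : fieldType) d (X Y : 'M[F]_d.+1) :
  (forall i, X *m bvec d.+1 i = Y *m bvec d.+1 i) -> X = Y.
Proof.
move=> h; apply/matrixP => r s.
have := congr1 (fun M : 'cV[F]_d.+1 => M r 0) (h s).
have hs : (s <= d)%N := ltn_ord s.
by rewrite !mulbvec hs inord_val.
Qed.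

Ltac natcases :=
  repeat match goal with |- context [(?x == ?y)%N] => case: (@eqP nat x y) => ? end.

Lemma Av (F : fieldType) (a : F) d i :
  Amx a d *m bvec d.+1 i = theta a d i *: bvec d.+1 i + bvec d.+1 i.+1.
Proof.
apply/matrixP => r s; rewrite ord1 mulbvec /bvec !mxE.
have hr := ltn_ord r; move: (nat_of_ord r) hr => m hm.
case: leqP => h; [rewrite inordK //|]; natcases; try (exfalso; lia); subst;
  rewrite ?mulr1 ?mulr0 ?addr0 ?add0r //.
Qed.

Lemma Bv (F : fieldType) (a b c : F) d i :
  Bmx a b c d *m bvec d.+1 i = theta_s b d i *: bvec d.+1 i
                              + phi a b c d i *: bvec_pred d.+1 i.
Proof.
apply/matrixP => r s; rewrite ord1 mulbvec.
case: i => [|i]; rewrite /bvec_pred /bvec !mxE;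
have hr := ltn_ord r; move: (nat_of_ord r) hr => m hm.
  rewrite leq0n inordK //; natcases; try (exfalso; lia); subst;
  rewrite ?mulr1 ?mulr0 ?addr0 ?add0r //.
have [h|h] := leqP i.+1 d; [rewrite inordK //|]; natcases; try (exfalso; lia); subst;
  rewrite ?mulr1 ?mulr0 ?addr0 ?add0r //.
have -> : i = d by lia.
rewrite /phi; ring.
Qed.

Lemma bvec_pred0 (F : fieldType) n : bvec_pred n 0 = 0 :> 'cV[F]_n. Proof. by []. Qed.
Lemma bvec_predS (F : fieldType) n k : bvec_pred n k.+1 = bvec n k :> 'cV[F]_n.
Proof. by []. Qed.

Definition del0 {F : fieldType} (a b c : F) d : F :=
  half_d d * (half_d d + 1) + a * (a + 1) + b * (b + 1) + c * (c + 1).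
Definition Cmx {F : fieldType} (a b c : F) d : 'M[F]_d.+1 :=
  (del0 a b c d)%:M - Amx a d - Bmx a b c d.
Definition Dmx {F : fieldType} (a b c : F) d : 'M[F]_d.+1 :=
  (2%:R)^-1 *: (Amx a d *m Bmx a b c d - Bmx a b c d *m Amx a d).

Ltac expand0 := repeat first [rewrite !mulmxDl | rewrite !mulmxBl | rewrite !mulNmx
  | rewrite -!scalemxAl | rewrite !mul_scalar_mx | rewrite !mul_mx_scalar | rewrite !mulmxDr
  | rewrite !mulmxBr | rewrite !mulmxN | rewrite -!scalemxAr]; rewrite -?mulmxA.
Ltac expand1 := repeat first [rewrite !Av | rewrite !Bv | rewrite !mulmxDr
  | rewrite -!scalemxAr | rewrite !bvec_predS | rewrite !bvec_pred0 | rewrite !scaler0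
  | rewrite !mulmx0].
Ltac expand := expand0; expand1.

Ltac finish :=
  apply/matrixP => ? ?; rewrite /bvec !mxE;
  match goal with |- context [nat_of_ord ?r] => generalize (nat_of_ord r) end;
  intros ?; natcases; try (exfalso; lia); subst;
  rewrite /theta /theta_s /phi /del0;
  try (match goal with H : half_d _ = _ |- _ => rewrite H end);
  try (match goal with H : (_%:R = ?h + ?h) |- _ => rewrite H end).
Lemma alpha_eq (F : fieldType) (hchar : (2%:R : F) != 0) (a b c : F) d :
  racah_alpha (Amx a d) (Bmx a b c d) (Cmx a b c d) (Dmx a b c d) =
   ((c - b) * (c + b + 1) * (a - half_d d) * (a + half_d d + 1))%:M.
Proof.
have [h [hh hd]] : exists h : F, half_d d = h /\ (d%:R : F) = h + h.
  by exists (half_d d); split => //; rewrite /half_d; field.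
apply: mx_ext => i; rewrite /racah_alpha /comm_mx_op /Cmx /Dmx.
case: i => [|k]; expand; finish; field; try exact: hchar.
Qed.

Ltac solve_ext :=
  let i := fresh "i" in let k := fresh "k" in
  move=> i; expand0; case: i => [|[|k]]; expand1; finish; field; try (assumption || done).

Lemma beta_eq (F : fieldType) (hchar : (2%:R : F) != 0) (a b c : F) d :
  racah_beta (Amx a d) (Bmx a b c d) (Cmx a b c d) (Dmx a b c d) =
   ((a - c) * (a + c + 1) * (b - half_d d) * (b + half_d d + 1))%:M.
Proof.
have hd : (d%:R : F) = half_d d + half_d d by rewrite /half_d; field.
apply: mx_ext; rewrite /racah_beta /comm_mx_op /Cmx /Dmx; solve_ext.
Qed.

Lemma gamma_eq (F : fieldType) (hchar : (2%:R : F) != 0) (a b c : F) d :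
  racah_gamma (Amx a d) (Bmx a b c d) (Cmx a b c d) (Dmx a b c d) =
   (- ((c - b) * (c + b + 1) * (a - half_d d) * (a + half_d d + 1)
      + (a - c) * (a + c + 1) * (b - half_d d) * (b + half_d d + 1)))%:M.
Proof.
have hd : (d%:R : F) = half_d d + half_d d by rewrite /half_d; field.
apply: mx_ext; rewrite /racah_gamma /comm_mx_op /Cmx /Dmx; solve_ext.
Qed.

Lemma commBC (F : fieldType) (hchar : (2%:R : F) != 0) (a b c : F) d :
  comm_mx_op (Bmx a b c d) (Cmx a b c d) = 2%:R *: Dmx a b c d.
Proof.
have hd : (d%:R : F) = half_d d + half_d d by rewrite /half_d; field.
apply: mx_ext; rewrite /comm_mx_op /Cmx /Dmx; solve_ext.
Qed.

Lemma commCA (F : fieldType) (hchar : (2%:R : F) != 0) (a b c : F) d :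
  comm_mx_op (Cmx a b c d) (Amx a d) = 2%:R *: Dmx a b c d.
Proof.
have hd : (d%:R : F) = half_d d + half_d d by rewrite /half_d; field.
apply: mx_ext; rewrite /comm_mx_op /Cmx /Dmx; solve_ext.
Qed.

Lemma delta_eq (F : fieldType) (hchar : (2%:R : F) != 0) (a b c : F) d :
  racah_delta (Amx a d) (Bmx a b c d) (Cmx a b c d) (Dmx a b c d) =
   (half_d d * (half_d d + 1) + a * (a + 1) + b * (b + 1) + c * (c + 1))%:M.
Proof.
have hd : (d%:R : F) = half_d d + half_d d by rewrite /half_d; field.
apply: mx_ext; rewrite /racah_delta /Cmx; solve_ext.
Qed.

Lemma comm_scalar_gens (F : fieldType) n (s : F) (A B C D : 'M[F]_n) :
  commutes_with_gens (s%:M) A B C D.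
Proof. by split; rewrite /comm_mx_op mul_scalar_mx mul_mx_scalar subrr. Qed.

Theorem proposition2p4 (F : closedFieldType) (hchar : (2%:R : F) != 0)
    (a b c : F) (d : nat) :
  exists A B C D : 'M[F]_d.+1,
    is_racah_module A B C D /\
    [/\ (forall i : nat, (i <= d)%N ->
           A *m bvec d.+1 i = theta a d i *: bvec d.+1 i + bvec d.+1 i.+1),
        (forall i : nat, (i <= d)%N ->
           B *m bvec d.+1 i = theta_s b d i *: bvec d.+1 i
                              + phi a b c d i *: bvec_pred d.+1 i),
        racah_alpha A B C D =
          ((c - b) * (c + b + 1) * (a - half_d d) * (a + half_d d + 1))%:M,
        racah_beta A B C D =
          ((a - c) * (a + c + 1) * (b - half_d d) * (b + half_d d + 1))%:M
      & racah_delta A B C D =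
          (half_d d * (half_d d + 1) + a * (a + 1) + b * (b + 1)
             + c * (c + 1))%:M].
Proof.
exists (Amx a d), (Bmx a b c d), (Cmx a b c d), (Dmx a b c d).
split; last split.
- split; split.
  + by rewrite /comm_mx_op /Dmx scalerA mulfV // scale1r.
  + exact: commBC.
  + exact: commCA.
  + rewrite alpha_eq //; exact: comm_scalar_gens.
  + rewrite beta_eq //; exact: comm_scalar_gens.
  + rewrite gamma_eq //; exact: comm_scalar_gens.
- by move=> i _; exact: Av.
- by move=> i _; exact: Bv.
- exact: alpha_eq.
- exact: beta_eq.
- exact: delta_eq.
Qed.
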